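(* Let $G$ be a finite group, $p$ a prime dividing $|G|$, $P\in\mathrm{Syl}_p(G)$ and $\Omega=\Omega_1(Z(P))$. If $r_p(G)-r_p(\Omega)\le1$, then the finite space $\mathcal{A}_p(G)'/G$ is contractible.
   Context: $\Omega_1(H)$ is the subgroup generated by the elements of order $p$ of $H$; $r_p(H)$ (the $p$-rank) is the largest $r$ such that $H$ has an elementary abelian subgroup of order $p^r$. $\mathcal{A}_p(G)$ is the poset of non-trivial elementary abelian $p$-subgroups of $G$, with $G$ acting by conjugation. $\mathcal{A}_p(G)'$ is the poset of non-empty chains of $\mathcal{A}_p(G)$ ordered by inclusion, with componentwise action; $\mathcal{A}_p(G)'/G$ is the orbit poset ($\overline{c}\le\overline{d}$ iff some representatives satisfy $c_1\subseteq d_1$), regarded as a finite $T_0$ space whose open sets are the down-sets. *)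

(* Defs.v *)
From HB Require Import structures.
From mathcomp Require Import all_boot all_order all_algebra all_fingroup all_solvable.
From mathcomp Require Import all_classical all_reals all_analysis.
From mathcomp Require Import Rstruct Rstruct_topology.

Set Implicit Arguments.
Unset Strict Implicit.
Unset Printing Implicit Defensive.

Local Open Scope classical_set_scope.

(* [alexandrov T le] is the type T with the topology whose open sets are the
   down-sets of the relation le.  For a finite poset this is the associated
   finite T0 space. *)
Definition alexandrov (T : choiceType) (le : rel T) : Type := T.

Section Alexandrov.
Variables (T : choiceType) (le : rel T).

Definition downset_open : set_system T :=
  fun U => forall x y, le y x -> U x -> U y.

Lemma downset_openT : downset_open setT.
Proof. by []. Qed.

Lemma downset_openI : setI_closed downset_open.
Proof. by move=> A B oA oB x y yx [Ax Bx]; split; [exact: oA yx Ax|exact: oB yx Bx]. Qed.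

Lemma downset_open_bigU (I : Type) (f : I -> set T) :
  (forall i, downset_open (f i)) -> downset_open (\bigcup_i f i).
Proof. by move=> oF x y yx [i _ fx]; exists i => //; exact: oF yx fx. Qed.

HB.instance Definition _ := Choice.on (alexandrov le).
HB.instance Definition _ := isOpenTopological.Build (alexandrov le)
  downset_openT downset_openI downset_open_bigU.
End Alexandrov.

Definition contractible (X : topologicalType) : Prop :=
  exists (x0 : X) (H : X * Rdefinitions.R -> X),
    {within [set xt : X * Rdefinitions.R | (0 <= xt.2 <= 1)%R], continuous H} /\
    (forall x, H (x, 0%R) = x) /\ (forall x, H (x, 1%R) = x0).

Local Close Scope classical_set_scope.
Section QuillenPoset.
Variables (gT : finGroupType) (G : {group gT}) (p : nat).

Definition Ap : {set {group gT}} := [set E in pElem p G | E :!=: 1%G].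

(* non-empty chains of A_p(G) (elements of A_p(G)') *)
Definition is_Ap_chain (c : {set {group gT}}) : bool :=
  [&& (0 < #|c|)%N, c \subset Ap &
      [forall E in c, forall F in c, (E \subset F) || (F \subset E)]].

Definition conj_chain (c : {set {group gT}}) (g : gT) : {set {group gT}} :=
  [set (E :^ g)%G | E in c].

Definition chain_orbit (c : {set {group gT}}) : {set {set {group gT}}} :=
  [set conj_chain c g | g in G].

Definition Ap_chain_orbits : {set {set {set {group gT}}}} :=
  [set chain_orbit c | c in [set c | is_Ap_chain c]].

Definition Ap_orbit_pt : Type := {O : {set {set {group gT}}} | O \in Ap_chain_orbits}.

HB.instance Definition _ := Finite.on Ap_orbit_pt.

Definition Ap_orbit_le : rel Ap_orbit_pt :=
  fun O1 O2 => [exists c in val O1, exists d in val O2, c \subset d].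

Definition Ap_orbit_space : topologicalType := alexandrov Ap_orbit_le.
End QuillenPoset.

(* Main.v *)
Require Import Defs.
From mathcomp Require Import all_boot all_order all_algebra all_fingroup all_solvable.
From mathcomp Require Import all_classical all_reals all_analysis.
From mathcomp Require Import Rstruct Rstruct_topology lra.
From Stdlib Require ClassicalEpsilon.

Set Implicit Arguments.
Unset Strict Implicit.
Unset Printing Implicit Defensive.

Module Dev.
Import mathcomp.boot.ssrbool mathcomp.boot.eqtype mathcomp.boot.ssrnat mathcomp.boot.seq mathcomp.boot.fintype mathcomp.boot.finset mathcomp.fingroup.fingroup mathcomp.fingroup.morphism mathcomp.solvable.center.
Import GroupScope.
Section Grp.
Variables (gT : finGroupType) (p : nat).
Implicit Types (A B : {set gT}) (X Y G H E F S T Q R V W M : {group gT}).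

Lemma ZJ A x : 'Z(A :^ x) = 'Z(A) :^ x.
Proof. by rewrite /center conjIg centJ. Qed.

Definition Om Q : {group gT} := ('Ohm_1('Z(Q)))%G.

Lemma OmJ Q x : Om (Q :^ x)%G :=: Om Q :^ x.
Proof. by rewrite /= ZJ OhmJ. Qed.

Lemma Om_sub Q : Om Q \subset Q.
Proof. exact: subset_trans (Ohm_sub 1 _) (center_sub Q). Qed.

Lemma Om_subZ Q : Om Q \subset 'Z(Q).
Proof. exact: Ohm_sub. Qed.

Lemma Om_abelem Q : p.-group Q -> p.-abelem (Om Q).
Proof.
by move=> pQ; apply: Ohm1_abelem; [apply: pgroupS pQ; apply: center_sub|apply: center_abelian].
Qed.

Hypothesis pr_p : prime p.

Lemma abelem_eq X Y : X \subset Y -> p.-abelem Y -> 'r_p(Y) <= 'r_p(X) -> X :=: Y.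
Proof.
move=> sXY abY le; have abX := abelemS sXY abY.
apply/eqP; rewrite eqEcard sXY /=.
rewrite (card_pgroup (abelem_pgroup abX)) (card_pgroup (abelem_pgroup abY)).
by rewrite -(p_rank_abelem abX) -(p_rank_abelem abY) leq_pexp2l ?prime_gt0.
Qed.

Lemma abelem_lt X Y : X \subset Y -> p.-abelem Y -> X != Y :> {set gT} -> 'r_p(X) < 'r_p(Y).
Proof.
move=> sXY abY neq; rewrite ltn_neqAle p_rankS // andbT.
apply/negP=> /eqP e; case/eqP: neq; apply: abelem_eq => //; by rewrite e.
Qed.


Lemma sub_cent_Syl H X S : X \subset H -> p.-group X -> abelian X ->
  p.-Sylow('C_H(X)) S -> X \subset 'Z(S).
Proof.
move=> sXH pX abX sylS.
have sXC : X \subset 'C_H(X) by rewrite subsetI sXH.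
have nXC : normal X 'C_H(X) by rewrite /normal sXC (subset_trans (subsetIr _ _) (cent_sub _)).
have sXS := normal_sub_max_pgroup (Hall_max sylS) pX nXC.
rewrite /center subsetI sXS centsC.
exact: subset_trans (pHall_sub sylS) (subsetIr _ _).
Qed.

Lemma sub_Om_Syl H X S : X \subset H -> p.-abelem X ->
  p.-Sylow('C_H(X)) S -> X \subset Om S.
Proof.
move=> sXH abX sylS; rewrite -(Ohm1_id abX) OhmS //.
exact: sub_cent_Syl sXH (abelem_pgroup abX) (abelem_abelian abX) sylS.
Qed.

Lemma Z_sub_Syl H X S R : p.-Sylow('C_H(X)) S -> p.-group R ->
  S \subset R -> R \subset H -> X \subset S -> 'Z(R) \subset 'Z(S).
Proof.
move=> sylS pR sSR sRH sXS.
have sSC := pHall_sub sylS.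
have sZC : 'Z(R) \subset 'C(X).
  by apply: subset_trans (subsetIr _ _) (centS (subset_trans sXS sSR)).
have sKC : R :&: 'C(X) \subset 'C_H(X) by apply: setSI.
have sSK : S \subset R :&: 'C(X) by rewrite subsetI sSR (subset_trans sSC (subsetIr _ _)).
have eK := sub_pHall sylS (pgroupS (subsetIl _ _) pR) sSK sKC.
have sZS : 'Z(R) \subset S by rewrite -eK subsetI center_sub sZC.
rewrite /center subsetI sZS /=.
exact: subset_trans (subsetIr _ _) (centS sSR).
Qed.

Lemma Om_sub_Syl H X S R : p.-Sylow('C_H(X)) S -> p.-group R ->
  S \subset R -> R \subset H -> X \subset S -> Om R \subset Om S.
Proof. by move=> sylS pR sSR sRH sXS; apply: OhmS; apply: Z_sub_Syl sylS pR sSR sRH sXS. Qed.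

End Grp.

Section Main.
Variables (gT : finGroupType) (G P : {group gT}) (p : nat).
Implicit Types (A B : {set gT}) (X Y H E F S T Q R V W M : {group gT}).
Hypotheses (pr_p : prime p) (sylP : p.-Sylow(G) P).
Let r := 'r_p(Om P).
Hypothesis rk : 'r_p(G) <= r.+1.

Lemma Syl_Om R : p.-Sylow(G) R -> exists2 x, x \in G & Om R :=: Om P :^ x.
Proof.
move=> sylR; have [x Gx eR] := Sylow_trans sylP sylR.
by exists x => //; rewrite /Om /= eR ZJ OhmJ.
Qed.

Lemma Syl_Om_rank R : p.-Sylow(G) R -> 'r_p(Om R) = r.
Proof. by move=> /Syl_Om[x _ ->]; rewrite p_rankJ. Qed.

Lemma rank_le A : A \subset G -> 'r_p(A) <= r.+1.
Proof. by move=> sAG; apply: leq_trans (p_rankS p sAG) rk. Qed.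

Definition typeA E : bool := [exists x in G, E \subset Om P :^ x].

Lemma typeAJ E g : g \in G -> typeA (E :^ g)%G = typeA E.
Proof.
move=> Gg; apply/existsP/existsP => [[x /andP[Gx sE]]|[x /andP[Gx sE]]].
  exists (x * g^-1); rewrite groupM ?groupV //=.
  by rewrite conjsgM -sub_conjg.
exists (x * g); rewrite groupM //=.
by rewrite conjsgM conjSg.
Qed.

Lemma typeA_Syl E S : E \subset G -> p.-abelem E -> p.-Sylow('C_G(E)) S ->
  typeA E = p.-Sylow(G) S.
Proof.
move=> sEG abE sylS; apply/idP/idP.
  case/existsP=> x /andP[Gx sEx].
  have sPxC : P :^ x \subset 'C_G(E).
    rewrite subsetI conj_subG ?(pHall_sub sylP) //= centsC.
    rewrite centJ; apply: subset_trans sEx _; rewrite conjSg.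
    exact: subset_trans (Om_subZ P) (subsetIr _ _).
  have pPx : p.-group (P :^ x) by rewrite pgroupJ (pHall_pgroup sylP).
  have [S' sylS' sPS'] := Sylow_superset sPxC pPx.
  have sylPx : p.-Sylow(G) (P :^ x)%G by rewrite pHallJ.
  have sS'G : S' \subset G := subset_trans (pHall_sub sylS') (subsetIl _ _).
  have eS' := sub_pHall sylPx (pHall_pgroup sylS') sPS' sS'G.
  have [y Cy eS] := Sylow_trans sylS' sylS.
  have Gy : y \in G by case/setIP: Cy.
  by rewrite eS eS' -conjsgM pHallJ ?groupM.
move=> sylSG; have [x Gx eS] := Syl_Om sylSG.
apply/existsP; exists x; rewrite Gx -eS.
exact: sub_Om_Syl sEG abE sylS.
Qed.

Lemma Syl_cent_Om E S : E \subset G -> p.-abelem E -> p.-Sylow('C_G(E)) S ->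
  exists2 R : {group gT}, p.-Sylow(G) R & S \subset R /\ Om R \subset Om S.
Proof.
move=> sEG abE sylS.
have sSG : S \subset G := subset_trans (pHall_sub sylS) (subsetIl _ _).
have [R sylR sSR] := Sylow_superset sSG (pHall_pgroup sylS).
exists R => //; split=> //.
apply: (Om_sub_Syl sylS (pHall_pgroup sylR) sSR (pHall_sub sylR)).
exact: subset_trans (sub_cent_Syl sEG (abelem_pgroup abE) (abelem_abelian abE) sylS) (center_sub _).
Qed.

Lemma Om_Syl_sub S X : p.-Sylow(X) S -> X \subset G -> Om S \subset G.
Proof. by move=> sylS sXG; apply: subset_trans (Om_sub _) (subset_trans (pHall_sub sylS) sXG). Qed.

Lemma rank_OmS E S : E \subset G -> p.-abelem E -> p.-Sylow('C_G(E)) S ->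
  'r_p(Om S) = (if typeA E then r else r.+1).
Proof.
move=> sEG abE sylS; rewrite (typeA_Syl sEG abE sylS).
case: ifP => [sylSG|nsyl]; first exact: Syl_Om_rank.
have [R sylR [sSR sOm]] := Syl_cent_Om sEG abE sylS.
have le1 : 'r_p(Om S) <= r.+1 by apply: rank_le; apply: Om_Syl_sub sylS (subsetIl _ _).
have ge : r <= 'r_p(Om S) by rewrite -(Syl_Om_rank sylR) p_rankS.
apply/eqP; rewrite eqn_leq le1 ltnNge /=; apply/negP => le2.
have abS : p.-abelem (Om S) by apply: Om_abelem (pHall_pgroup sylS).
have eq : Om R :=: Om S by apply: (abelem_eq pr_p sOm abS); rewrite (Syl_Om_rank sylR).
have := typeA_Syl sEG abE sylS; rewrite nsyl => /negbT/existsP; apply.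
have [x Gx eR] := Syl_Om sylR; exists x; rewrite Gx -eR eq.
exact: sub_Om_Syl sEG abE sylS.
Qed.

Section CLemma.
Variables (H M : {group gT}).
Hypotheses (sHG : H \subset G) (sylHG : forall R, p.-Sylow(H) R -> p.-Sylow(G) R).
Hypotheses (sMH : M \subset H) (abM : p.-abelem M) (rM : 'r_p(M) = r.+1).

Lemma QM Q : p.-Sylow('C_H(M)) Q -> Om Q :=: M.
Proof.
move=> sylQ; have sMO := sub_Om_Syl sMH abM sylQ.
symmetry; apply: (abelem_eq pr_p sMO (Om_abelem (pHall_pgroup sylQ))).
rewrite rM rank_le //; apply: Om_Syl_sub sylQ _.
exact: subset_trans (subsetIl _ _) sHG.
Qed.

Lemma join_eqM (A B : {group gT}) : A \subset M -> B \subset M -> 'r_p(A) = r -> 'r_p(B) = r ->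
  A :!=: B -> A <*> B = M.
Proof.
move=> sAM sBM rA rB nAB.
have sJM : A <*> B \subset M by rewrite join_subG sAM.
have abJ := abelemS sJM abM.
have nAJ : (A : {set gT}) != A <*> B.
  apply/eqP=> eAJ; case/eqP: nAB.
  have sBA : B \subset A by rewrite eAJ joing_subr.
  apply: esym; apply: (abelem_eq pr_p sBA (abelemS sAM abM)); by rewrite rA rB.
have lt := abelem_lt pr_p (joing_subl A B) abJ nAJ.
apply: (abelem_eq pr_p sJM abM); by rewrite rM -rA.
Qed.

Lemma OmR_M V R : p.-Sylow((H :&: 'N(M))) V -> p.-Sylow(H) R -> V \subset R -> Om R \subset M.
Proof.
move=> sylV sylR sVR.
have sylQ := Sylow_setI_normal (subcent_normal H M) sylV.
have sQR : 'C_H(M) :&: V \subset R := subset_trans (subsetIr _ _) sVR.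
have sMQ : M \subset 'C_H(M) :&: V.
  exact: subset_trans (sub_cent_Syl sMH (abelem_pgroup abM) (abelem_abelian abM) sylQ) (center_sub _).
have := Om_sub_Syl sylQ (pHall_pgroup sylR) sQR (pHall_sub sylR) sMQ.
by rewrite (QM sylQ).
Qed.


Lemma Om_cent R V : V \subset R -> V \subset 'C(Om R).
Proof.
move=> sVR; rewrite centsC; apply: subset_trans (Om_subZ R) _.
exact: subset_trans (subsetIr _ _) (centS sVR).
Qed.

Lemma norm_OmV V : Om V :=: M -> 'N(V) \subset 'N(M).
Proof.
move=> <-; apply: char_norms.
exact: char_trans (Ohm_char 1 _) (center_char V).
Qed.

Lemma U V R1 R2 : p.-Sylow((H :&: 'N(M))) V -> p.-Sylow(H) R1 -> p.-Sylow(H) R2 ->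
  V \subset R1 -> V \subset R2 -> Om R1 :=: Om R2.
Proof.
move=> sylV sylR1 sylR2 sVR1 sVR2.
case: (eqVneq (Om R1 : {set gT}) (Om R2)) => // neq; exfalso.
have sAM := OmR_M sylV sylR1 sVR1; have sBM := OmR_M sylV sylR2 sVR2.
have rA := Syl_Om_rank (sylHG sylR1); have rB := Syl_Om_rank (sylHG sylR2).
have eM := join_eqM sAM sBM rA rB neq.
have cVM : V \subset 'C(M) by rewrite -eM centY subsetI !Om_cent.
have sVH : V \subset H := subset_trans (pHall_sub sylV) (subsetIl _ _).
have sVC : V \subset 'C_H(M) by rewrite subsetI sVH.
have sylVC : p.-Sylow('C_H(M)) V.
  by have := Sylow_setI_normal (subcent_normal H M) sylV; rewrite (setIidPr sVC).
have nVM := norm_OmV (QM sylVC).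
have eR : forall R, p.-Sylow(H) R -> V \subset R -> R :=: V.
  move=> R sylR sVR; have pR := pHall_pgroup sylR.
  have sNV : (R :&: 'N(V)) \subset (H :&: 'N(M)) := setISS (pHall_sub sylR) nVM.
  have sVN : V \subset (R :&: 'N(V)) by rewrite subsetI sVR normG.
  have eN := sub_pHall sylV (pgroupS (subsetIl _ _) pR) sVN sNV.
  by apply: nilpotent_sub_norm (pgroup_nil pR) sVR _; rewrite eN.
by case/eqP: neq; rewrite /Om /= (eR _ sylR1 sVR1) (eR _ sylR2 sVR2).
Qed.

Lemma Ex R : p.-Sylow(H) R -> Om R \subset M ->
  exists V : {group gT}, exists R' : {group gT},
    [/\ p.-Sylow((H :&: 'N(M))) V, p.-Sylow(H) R', V \subset R' & Om R' :=: Om R].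
Proof.
move=> sylR sAM.
pose L := ('C_H(Om R) :&: 'N(M))%G.
have [W sylW] := Sylow_exists p L.
have pW := pHall_pgroup sylW.
have sWC : W \subset 'C_H(Om R) := subset_trans (pHall_sub sylW) (subsetIl _ _).
have [R0 sylR0 sWR0] := Sylow_superset sWC pW.
have sRC : R \subset 'C_H(Om R) by rewrite subsetI (pHall_sub sylR) Om_cent.
have sylRC := pHall_subl sRC (subsetIl _ _) sylR.
have [y Cy eR0] := Sylow_trans sylRC sylR0.
have /setIP[Hy cy] := Cy.
have sylR0H : p.-Sylow(H) R0 by rewrite eR0 pHallJ.
have OmR0 : Om R0 :=: Om R.
  rewrite /Om /= eR0 ZJ OhmJ; apply/normP.
  exact: (subsetP (cent_sub _)) _ cy.
have sWN : W \subset (H :&: 'N(M)).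
  by apply: subset_trans (pHall_sub sylW) _; apply: setSI; apply: subsetIl.
have [V sylV sWV] := Sylow_superset sWN pW.
have pV := pHall_pgroup sylV.
have sVH : V \subset H := subset_trans (pHall_sub sylV) (subsetIl _ _).
have [R1 sylR1 sVR1] := Sylow_superset sVH pV.
case: (eqVneq (Om R1 : {set gT}) (Om R)) => [e|ne].
  by exists V, R1; split.
have sBM := OmR_M sylV sylR1 sVR1.
have rA := Syl_Om_rank (sylHG sylR); have rB := Syl_Om_rank (sylHG sylR1).
have ne' : (Om R : {set gT}) != Om R1 by rewrite eq_sym.
have eM := join_eqM sAM sBM rA rB ne'.
have VC : V :&: 'C(Om R) \subset L.
  apply/subsetP => z /setIP[Vz Cz].
  have /setIP[Hz Nz] := subsetP (pHall_sub sylV) z Vz.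
  by apply/setIP; split=> //; apply/setIP.
have sWVC : W \subset V :&: 'C(Om R).
  by rewrite subsetI sWV (subset_trans sWC (subsetIr _ _)).
have eW := sub_pHall sylW (pgroupS (subsetIl _ _) pV) sWVC VC.
have cVB : V \subset 'C(Om R1) := Om_cent sVR1.
have eW2 : 'C_H(M) :&: V = W.
  rewrite -eW -eM centY; apply/setP => z; apply/idP/idP.
    by case/setIP => /setIP[_ /setIP[cA _]] Vz; rewrite inE Vz cA.
  case/setIP=> Vz cA; rewrite !inE Vz cA (subsetP sVH z Vz) /=.
  by rewrite (subsetP cVB z Vz).
have sylW' : p.-Sylow('C_H(M)) W.
  by have := Sylow_setI_normal (subcent_normal H M) sylV; rewrite eW2.
have nWM := norm_OmV (QM sylW').
have sNL : (R0 :&: 'N(W)) \subset L := setISS (pHall_sub sylR0) nWM.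
have pR0 := pHall_pgroup sylR0.
have sWN0 : W \subset (R0 :&: 'N(W)) by rewrite subsetI sWR0 normG.
have eN := sub_pHall sylW (pgroupS (subsetIl _ _) pR0) sWN0 sNL.
have eR0W : R0 :=: W.
  by apply: nilpotent_sub_norm (pgroup_nil pR0) sWR0 _; rewrite eN.
have sylWH : p.-Sylow(H) W by rewrite -eR0W.
have eVW := sub_pHall sylWH pV sWV sVH.
by exists V, R0; split=> //; rewrite eVW.
Qed.

Lemma CL R1 R2 : p.-Sylow(H) R1 -> p.-Sylow(H) R2 -> Om R1 \subset M -> Om R2 \subset M ->
  exists2 n, n \in (H :&: 'N(M)) & Om R1 :^ n = Om R2.
Proof.
move=> sylR1 sylR2 s1 s2.
have [V1 [R1' [sylV1 sylR1' sV1 e1]]] := Ex sylR1 s1.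
have [V2 [R2' [sylV2 sylR2' sV2 e2]]] := Ex sylR2 s2.
have [n Nn eV2] := Sylow_trans sylV1 sylV2.
have /setIP[Hn _] := Nn.
have sylR1n : p.-Sylow(H) (R1' :^ n)%G by rewrite pHallJ.
have sV2n : V2 \subset (R1' :^ n)%G by rewrite eV2 conjSg.
have eU := U sylV2 sylR1n sylR2' sV2n sV2.
by exists n => //; rewrite -e1 -e2 -eU OmJ.
Qed.

End CLemma.
End Main.

Section Chains.
Variables (gT : finGroupType) (G : {group gT}) (p : nat).
Implicit Types (E F t a X S T Q R M : {group gT}) (c d e : {set {group gT}}).

Lemma ApP E : reflect [/\ E \subset G, p.-abelem E & E :!=: 1%G] (E \in Ap G p).
Proof.
rewrite /Ap inE; apply: (iffP andP) => [[/pElemP[? ?] ?]|[? ? ?]]; first by split.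
by split=> //; apply/pElemP.
Qed.

Lemma chain_ne c : is_Ap_chain G p c -> exists E, E \in c.
Proof. by case/and3P=> /card_gt0P. Qed.

Lemma chain_Ap c E : is_Ap_chain G p c -> E \in c -> E \in Ap G p.
Proof. by case/and3P=> _ /subsetP sc _ /sc. Qed.

Lemma chain_cmp c E F : is_Ap_chain G p c -> E \in c -> F \in c -> (E \subset F) || (F \subset E).
Proof. by case/and3P=> _ _ /forall_inP h /h /forall_inP h2 /h2. Qed.

Lemma chain_intro d : (exists E, E \in d) -> {subset d <= Ap G p} ->
  (forall E F, E \in d -> F \in d -> (E \subset F) || (F \subset E)) -> is_Ap_chain G p d.
Proof.
move=> [E Ed] sd cmp; apply/and3P; split.
- by apply/card_gt0P; exists E.
- by apply/subsetP.
by apply/forall_inP => E1 E1d; apply/forall_inP => F1 F1d; apply: cmp.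
Qed.

Lemma subchain c d : is_Ap_chain G p c -> d \subset c -> (exists E, E \in d) -> is_Ap_chain G p d.
Proof.
move=> hc /subsetP sdc ne; apply: chain_intro => // [E /sdc|E F /sdc Ec /sdc Fc].
  exact: chain_Ap hc.
exact: chain_cmp hc Ec Fc.
Qed.

Definition topc t c := t \in c /\ forall E, E \in c -> E \subset t.

Lemma chain_top c : is_Ap_chain G p c -> exists t, topc t c.
Proof.
move=> hc; have [E0 E0c] := chain_ne hc.
case: (arg_maxnP (fun E : {group gT} => #|E|) E0c) => t tc maxt.
exists t; split=> // E Ec.
case/orP: (chain_cmp hc Ec tc) => // stE.
have eq : (t : {set gT}) == E by rewrite eqEcard stE; apply: maxt.
by rewrite -(eqP eq).
Qed.

Lemma top_uniq t t' c : topc t c -> topc t' c -> t = t'.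
Proof.
move=> [tc ht] [t'c ht']; apply: val_inj => /=.
by apply/eqP; rewrite eqEsubset ht // ht'.
Qed.

Lemma mem_conj c E g : E \in c -> (E :^ g)%G \in conj_chain c g.
Proof. by move=> Ec; apply/imsetP; exists E. Qed.

Lemma conj_chainP c g F : F \in conj_chain c g -> exists2 E, E \in c & F = (E :^ g)%G.
Proof. by rewrite /conj_chain => /imsetP. Qed.

Lemma ApJ E g : g \in G -> E \in Ap G p -> (E :^ g)%G \in Ap G p.
Proof.
move=> Gg /ApP[sEG abE ntE]; apply/ApP; split.
- exact: conj_subG.
- by rewrite abelemJ.
by rewrite /= conjsg_eq1.
Qed.

Lemma conj_chain_chain c g : g \in G -> is_Ap_chain G p c -> is_Ap_chain G p (conj_chain c g).
Proof.
move=> Gg hc; have [E Ec] := chain_ne hc.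
apply: chain_intro.
- by exists (E :^ g)%G; apply: mem_conj.
- by move=> F /conj_chainP[E1 E1c ->]; apply: ApJ => //; apply: chain_Ap hc E1c.
move=> F1 F2 /conj_chainP[E1 E1c ->] /conj_chainP[E2 E2c ->] /=.
by rewrite !conjSg; apply: chain_cmp hc E1c E2c.
Qed.

Lemma conj_chainS c d g : c \subset d -> conj_chain c g \subset conj_chain d g.
Proof. exact: imsetS. Qed.

Lemma conjG_M E g h : ((E :^ g) :^ h)%G = (E :^ (g * h))%G.
Proof. by apply: val_inj; rewrite /= conjsgM. Qed.

Lemma conj_chainM c g h : conj_chain (conj_chain c g) h = conj_chain c (g * h).
Proof.
rewrite /conj_chain -imset_comp; apply: eq_imset => E /=.
exact: conjG_M.
Qed.

Lemma conj_chain1 c : conj_chain c 1 = c.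
Proof.
rewrite /conj_chain (eq_imset (g := id)) ?imset_id // => E.
by apply: val_inj; rewrite /= conjsg1.
Qed.

Lemma conj_chainU c d g : conj_chain (c :|: d) g = conj_chain c g :|: conj_chain d g.
Proof. exact: imsetU. Qed.

Lemma conj_chain_set1 E g : conj_chain [set E] g = [set (E :^ g)%G].
Proof. exact: imset_set1. Qed.

Lemma conj_chain_fix c g : (forall E, E \in c -> g \in 'N(E)) -> conj_chain c g = c.
Proof.
move=> hN; rewrite /conj_chain (eq_in_imset (g := id)) ?imset_id // => E Ec.
by apply: val_inj; rewrite /= (normP (hN E Ec)).
Qed.

Lemma conj_chain_fix_top c t g : topc t c -> g \in 'C(t) -> conj_chain c g = c.
Proof.
move=> [_ ht] Ct; apply: conj_chain_fix => E Ec.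
exact: (subsetP (cent_sub E)) _ ((subsetP (centS (ht E Ec))) _ Ct).
Qed.

Lemma topcJ t c g : topc t c -> topc (t :^ g)%G (conj_chain c g).
Proof.
move=> [tc ht]; split; first exact: mem_conj.
by move=> F /conj_chainP[E Ec ->] /=; rewrite conjSg ht.
Qed.

Lemma orbit_mem c : c \in chain_orbit G c.
Proof. by apply/imsetP; exists 1; rewrite ?group1 ?conj_chain1. Qed.

Lemma orbit_conj c g : g \in G -> conj_chain c g \in chain_orbit G c.
Proof. by move=> Gg; apply/imsetP; exists g. Qed.

Lemma orbit_same c d e : d \in chain_orbit G c -> e \in chain_orbit G c ->
  exists2 g, g \in G & e = conj_chain d g.
Proof.
case/imsetP=> a Ga ->; case/imsetP=> b Gb ->.
exists (a^-1 * b); first by rewrite groupM ?groupV.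
by rewrite conj_chainM mulgA mulgV mul1g.
Qed.

End Chains.

Section Specs.
Variables (gT : finGroupType) (G P : {group gT}) (p : nat).
Implicit Types (E F t a X S T Q R M : {group gT}) (c d e : {set {group gT}}).
Hypotheses (pr_p : prime p) (sylP : p.-Sylow(G) P).
Let r := 'r_p(Om P).
Hypothesis rk : 'r_p(G) <= r.+1.
Hypothesis ntOm : Om P :!=: 1%G.

Local Notation chain := (is_Ap_chain G p).
Local Notation tA := (typeA G P).

Definition prechain d := {subset d <= Ap G p} /\
  (forall E F, E \in d -> F \in d -> (E \subset F) || (F \subset E)).

Lemma chain_pre c : chain c -> prechain c.
Proof. by move=> hc; split=> [E|E F]; [apply: chain_Ap hc|apply: chain_cmp hc]. Qed.

Lemma pre_sub c d : prechain c -> d \subset c -> prechain d.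
Proof. by move=> [h1 h2] /subsetP s; split=> [E /s /h1 //|E F /s Ec /s Fc]; apply: h2. Qed.

Lemma pre_add c M : prechain c -> M \in Ap G p -> (forall E, E \in c -> E \subset M) ->
  prechain (c :|: [set M]).
Proof.
move=> [h1 h2] AM sM; split=> [E|E F].
  by case/setUP=> [/h1 //|/set1P ->].
case/setUP=> [Ec|/set1P ->]; case/setUP=> [Fc|/set1P ->].
- exact: h2.
- by rewrite sM.
- by rewrite sM ?orbT.
by rewrite subxx.
Qed.

Lemma pre_chain c : prechain c -> (exists E, E \in c) -> chain c.
Proof. by move=> [h1 h2] ne; apply: chain_intro. Qed.

Lemma pre_add_chain c M : prechain c -> M \in Ap G p -> (forall E, E \in c -> E \subset M) ->
  chain (c :|: [set M]).
Proof.
move=> *; apply: pre_chain; first exact: pre_add.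
by exists M; rewrite inE set11 orbT.
Qed.

Definition cA c := [set E in c | tA E].

Lemma cA_sub c : cA c \subset c.
Proof. by apply/subsetP => E; rewrite inE => /andP[]. Qed.

Lemma tA_down E F : E \subset F -> tA F -> tA E.
Proof.
move=> sEF /existsP[x /andP[Gx sF]]; apply/existsP; exists x.
by rewrite Gx (subset_trans sEF).
Qed.

Lemma cA_J c g : g \in G -> conj_chain (cA c) g = cA (conj_chain c g).
Proof.
move=> Gg; apply/setP => F; apply/idP/idP.
  case/conj_chainP=> E; rewrite inE => /andP[Ec AE] ->.
  by rewrite inE mem_conj //= typeAJ.
rewrite inE => /andP[/conj_chainP[E Ec eF] AF].
by rewrite eF mem_conj // inE Ec -(typeAJ P E Gg) -eF.
Qed.

Lemma top_Ap c t : chain c -> topc t c -> t \in Ap G p.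
Proof. by move=> hc [tc _]; apply: chain_Ap hc tc. Qed.

Lemma CtG t : 'C_G(t) \subset G.
Proof. exact: subsetIl. Qed.

Lemma t_sub_OmS t S : t \in Ap G p -> p.-Sylow('C_G(t)) S -> t \subset Om S.
Proof. by move=> /ApP[sG ab _] sylS; apply: sub_Om_Syl sG ab sylS. Qed.

Lemma OmS_Ap t S : t \in Ap G p -> p.-Sylow('C_G(t)) S -> Om S \in Ap G p.
Proof.
move=> At sylS; have /ApP[_ _ nt] := At; apply/ApP; split.
- exact: Om_Syl_sub sylS (CtG t).
- exact: Om_abelem (pHall_pgroup sylS).
apply: contra nt => /eqP e; apply/eqP; apply/trivgP.
by rewrite -e t_sub_OmS.
Qed.

Lemma rankOmS t S : t \in Ap G p -> p.-Sylow('C_G(t)) S ->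
  'r_p(Om S) = (if tA t then r else r.+1).
Proof. by move=> /ApP[sG ab _] sylS; apply: rank_OmS. Qed.

Lemma SylJ t S g : g \in G -> p.-Sylow('C_G(t)) S -> p.-Sylow('C_G(t :^ g)) (S :^ g)%G.
Proof.
move=> Gg sylS; have e : 'C_G(t :^ g) = 'C_G(t) :^ g by rewrite conjIg centJ conjGid.
by rewrite e pHallJ2.
Qed.

Lemma OmGJ S g : Om (S :^ g)%G = (Om S :^ g)%G.
Proof. by apply: val_inj; rewrite /= OmJ. Qed.

Lemma KM t t' S S' : t \subset t' -> t' \in Ap G p -> p.-Sylow('C_G(t)) S ->
  p.-Sylow('C_G(t')) S' -> exists2 y, y \in 'C_G(t) & Om (S :^ y)%G \subset Om S'.
Proof.
move=> stt' At' sylS sylS'.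
have sCC : 'C_G(t') \subset 'C_G(t) by apply: setIS; apply: centS.
have [S2 sylS2 sS'2] := Sylow_superset (subset_trans (pHall_sub sylS') sCC) (pHall_pgroup sylS').
have [y Cy eS2] := Sylow_trans sylS sylS2.
exists y => //.
have := Om_sub_Syl sylS' (pHall_pgroup sylS2) sS'2 (subset_trans (pHall_sub sylS2) (CtG t)) _.
rewrite /Om /= -eS2; apply.
exact: subset_trans (t_sub_OmS At' sylS') (Om_sub _).
Qed.


Definition spec1 c d := exists t S, [/\ topc t c, p.-Sylow('C_G(t)) S &
  d = if tA t then c else c :|: [set Om S]].
Definition spec2 c d := exists t S, [/\ topc t c, p.-Sylow('C_G(t)) S &
  d = if tA t then c else cA c :|: [set Om S]].

Lemma ex_topS c : chain c -> exists t, exists S, topc t c /\ p.-Sylow('C_G(t)) S.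
Proof.
move=> hc; have [t tc] := chain_top hc.
by have [S sylS] := Sylow_exists p 'C_G(t); exists t, S.
Qed.

Lemma top_sub_OmS c t S E : chain c -> topc t c -> p.-Sylow('C_G(t)) S -> E \in c -> E \subset Om S.
Proof.
move=> hc tc sylS Ec; apply: subset_trans (proj2 tc E Ec) _.
exact: t_sub_OmS (top_Ap hc tc) sylS.
Qed.

Lemma spec1_ex c : chain c -> exists d, chain d /\ spec1 c d.
Proof.
move=> hc; have [t [S [tc sylS]]] := ex_topS hc.
exists (if tA t then c else c :|: [set Om S]); split; last by exists t, S.
case: ifP => // _; apply: (pre_add_chain (chain_pre hc) (OmS_Ap (top_Ap hc tc) sylS)).
by move=> E; apply: (top_sub_OmS hc tc sylS).
Qed.

Lemma spec2_ex c : chain c -> exists d, chain d /\ spec2 c d.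
Proof.
move=> hc; have [t [S [tc sylS]]] := ex_topS hc.
exists (if tA t then c else cA c :|: [set Om S]); split; last by exists t, S.
case: ifP => // _; apply: (pre_add_chain (pre_sub (chain_pre hc) (cA_sub c)) (OmS_Ap (top_Ap hc tc) sylS)).
by move=> E /(subsetP (cA_sub c)); apply: (top_sub_OmS hc tc sylS).
Qed.

Lemma spec1J c d g : g \in G -> spec1 c d -> spec1 (conj_chain c g) (conj_chain d g).
Proof.
move=> Gg [t [S [tc sylS ->]]]; exists (t :^ g)%G, (S :^ g)%G; split.
- exact: topcJ.
- exact: SylJ.
by rewrite typeAJ //; case: ifP => _ //; rewrite conj_chainU conj_chain_set1 OmGJ.
Qed.

Lemma spec2J c d g : g \in G -> spec2 c d -> spec2 (conj_chain c g) (conj_chain d g).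
Proof.
move=> Gg [t [S [tc sylS ->]]]; exists (t :^ g)%G, (S :^ g)%G; split.
- exact: topcJ.
- exact: SylJ.
by rewrite typeAJ //; case: ifP => _ //; rewrite conj_chainU conj_chain_set1 OmGJ cA_J.
Qed.

Lemma conj_Om_eq t t' S S' : t \subset t' -> t \in Ap G p -> t' \in Ap G p ->
  tA t = tA t' -> p.-Sylow('C_G(t)) S -> p.-Sylow('C_G(t')) S' ->
  exists2 y, y \in 'C_G(t) & (Om S :^ y)%G = Om S'.
Proof.
move=> stt' At At' eA sylS sylS'.
have [y Cy sO] := KM stt' At' sylS sylS'.
exists y => //; apply: val_inj => /=; rewrite -OmJ.
apply: (abelem_eq pr_p sO (Om_abelem (pHall_pgroup sylS'))).
by rewrite OmJ p_rankJ (rankOmS At sylS) (rankOmS At' sylS') eA.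
Qed.

Lemma conj_fix_sub c c0 t y : topc t c -> c0 \subset c -> y \in 'C(t) -> conj_chain c0 y = c0.
Proof.
move=> [_ ht] /subsetP s Cy; apply: conj_chain_fix => E /s Ec.
exact: (subsetP (cent_sub E)) _ ((subsetP (centS (ht E Ec))) _ Cy).
Qed.

Lemma tops_sub c c' t t' : c \subset c' -> topc t c -> topc t' c' -> t \subset t'.
Proof. by move=> /subsetP s [tc _] [_ h]; apply: h; apply: s. Qed.

Lemma cA_S c c' : c \subset c' -> cA c \subset cA c'.
Proof. by move=> s; apply/subsetP => E; rewrite !inE => /andP[Ec ->]; rewrite (subsetP s E Ec). Qed.

Lemma all_A c t E : topc t c -> tA t -> E \in c -> E \in cA c.
Proof. by move=> [_ h] At Ec; rewrite inE Ec (tA_down (h E Ec) At). Qed.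

Lemma spec1_mono c c' d d' : chain c -> chain c' -> c \subset c' ->
  spec1 c d -> spec1 c' d' -> exists2 x, x \in G & conj_chain d x \subset d'.
Proof.
move=> hc hc' sc [t [S [tc sylS ->]]] [t' [S' [tc' sylS' ->]]].
have stt' := tops_sub sc tc tc'.
have hd' : c' \subset (if tA t' then c' else c' :|: [set Om S']).
  by case: ifP => _ //; apply: subsetUl.
case: (boolP (tA t)) => At.
  by exists 1; rewrite ?group1 // conj_chain1 (subset_trans sc hd').
have nAt' : ~~ tA t' by apply: contra At; apply: tA_down.
rewrite /= (negbTE nAt').
have eA : tA t = tA t' by rewrite (negbTE At) (negbTE nAt').
have [y Cy eO] := conj_Om_eq stt' (top_Ap hc tc) (top_Ap hc' tc') eA sylS sylS'.
have /setIP[Gy cy] := Cy.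
exists y => //; rewrite conj_chainU conj_chain_set1 (conj_chain_fix_top tc cy) eO.
exact: setSU.
Qed.

Lemma spec2_mono c c' d d' : chain c -> chain c' -> c \subset c' ->
  spec2 c d -> spec2 c' d' -> exists2 x, x \in G & conj_chain d x \subset d'.
Proof.
move=> hc hc' sc [t [S [tc sylS ->]]] [t' [S' [tc' sylS' ->]]].
have stt' := tops_sub sc tc tc'.
case: (boolP (tA t)) => At.
  exists 1; rewrite ?group1 // conj_chain1.
  case: ifP => _ //; apply: subset_trans (subsetUl _ _).
  by apply/subsetP => E Ec; apply: (subsetP (cA_S sc)); apply: all_A tc At Ec.
have nAt' : ~~ tA t' by apply: contra At; apply: tA_down.
rewrite /= (negbTE nAt').
have eA : tA t = tA t' by rewrite (negbTE At) (negbTE nAt').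
have [y Cy eO] := conj_Om_eq stt' (top_Ap hc tc) (top_Ap hc' tc') eA sylS sylS'.
have /setIP[Gy cy] := Cy.
exists y => //; rewrite conj_chainU conj_chain_set1 (conj_fix_sub tc (cA_sub c) cy) eO.
by apply: setSU; apply: cA_S.
Qed.

Lemma spec1_ge c d : spec1 c d -> c \subset d.
Proof. by move=> [t [S [_ _ ->]]]; case: ifP => _ //; apply: subsetUl. Qed.

Lemma spec21 c d1 d2 : chain c -> spec1 c d1 -> spec2 c d2 ->
  exists2 x, x \in G & conj_chain d2 x \subset d1.
Proof.
move=> hc [t [S [tc sylS ->]]] [t2 [S2 [tc2 sylS2 ->]]].
have et := top_uniq tc2 tc; subst t2.
case: ifP => At; first by exists 1; rewrite ?group1 ?conj_chain1.
have [y Cy eS] := Sylow_trans sylS2 sylS.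
have /setIP[Gy cy] := Cy.
exists y => //; rewrite conj_chainU conj_chain_set1 (conj_fix_sub tc (cA_sub c) cy).
have -> : (Om S2 :^ y)%G = Om S by apply: val_inj; rewrite /= -OmJ /Om /= -eS.
exact: setSU (cA_sub c).
Qed.


Definition spec3 c d := exists t S, [/\ topc t c, p.-Sylow('C_G(t)) S &
  (exists a S2, [/\ topc a (cA c), p.-Sylow('C_G(a)) S2, S \subset S2 &
        d = (cA c :|: [set Om S2]) :|: [set Om S]])
  \/ (cA c = set0 /\ exists Q R, [/\ p.-Sylow((G :&: 'N(Om S))) Q, p.-Sylow(G) R, Q \subset R &
        d = [set Om R] :|: [set Om S]])].

Lemma SylG_Ap R : p.-Sylow(G) R -> Om R \in Ap G p.
Proof.
move=> sylR; have [x Gx eR] := Syl_Om sylP sylR.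
apply/ApP; split.
- by rewrite eR conj_subG // (subset_trans (Om_sub P) (pHall_sub sylP)).
- exact: Om_abelem (pHall_pgroup sylR).
by rewrite eR conjsg_eq1.
Qed.

Lemma noA_top c t : topc t c -> cA c = set0 -> ~~ tA t.
Proof.
move=> [tc _] e0; apply/negP => At.
by have := in_set0 t; rewrite -e0 inE tc At.
Qed.

Lemma a_sub_t c a t : topc a (cA c) -> topc t c -> a \subset t.
Proof. by move=> [ac _] [_ h]; apply: h; apply: (subsetP (cA_sub c)). Qed.

Lemma OmS2_sub c t a S S2 : chain c -> topc t c -> topc a (cA c) -> p.-Sylow('C_G(t)) S ->
  p.-Sylow('C_G(a)) S2 -> S \subset S2 -> Om S2 \subset Om S.
Proof.
move=> hc tc ac sylS sylS2 sSS2.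
apply: (Om_sub_Syl sylS (pHall_pgroup sylS2) sSS2 (subset_trans (pHall_sub sylS2) (CtG a))).
exact: subset_trans (t_sub_OmS (top_Ap hc tc) sylS) (Om_sub _).
Qed.

Lemma a_Ap c a : chain c -> topc a (cA c) -> a \in Ap G p.
Proof. by move=> hc [ac _]; apply: chain_Ap hc (subsetP (cA_sub c) a ac). Qed.

Lemma a_tA c a : topc a (cA c) -> tA a.
Proof. by move=> [ac _]; move: ac; rewrite inE => /andP[]. Qed.

Lemma OmR_sub_OmS c t S Q R : chain c -> topc t c -> p.-Sylow('C_G(t)) S -> ~~ tA t ->
  p.-Sylow((G :&: 'N(Om S))) Q -> p.-Sylow(G) R -> Q \subset R -> Om R \subset Om S.
Proof.
move=> hc tc sylS nA sylQ sylR sQR.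
have At := top_Ap hc tc.
have rS : 'r_p(Om S) = r.+1 by rewrite (rankOmS At sylS) (negbTE nA).
have sOG : Om S \subset G := Om_Syl_sub sylS (CtG t).
exact: (OmR_M pr_p rk (subxx G) sOG (Om_abelem (pHall_pgroup sylS)) rS sylQ sylR sQR).
Qed.

Lemma spec3_ex c : chain c -> exists d, chain d /\ spec3 c d.
Proof.
move=> hc; have [t [S [tc sylS]]] := ex_topS hc.
have At := top_Ap hc tc.
case: (set_0Vmem (cA c)) => [e0|[a0 a0c]].
  have nA := noA_top tc e0.
  have [Q sylQ] := Sylow_exists p (G :&: 'N(Om S)).
  have [R sylR sQR] := Sylow_superset (subset_trans (pHall_sub sylQ) (subsetIl _ _)) (pHall_pgroup sylQ).
  exists ([set Om R] :|: [set Om S]); split; last first.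
    by exists t, S; split=> //; right; split=> //; exists Q, R.
  apply: (pre_add_chain _ (OmS_Ap At sylS)).
    rewrite -[[set Om R]]set0U; apply: (pre_add _ (SylG_Ap sylR)).
      by split=> [E|E F]; rewrite in_set0.
    by move=> E; rewrite in_set0.
  by move=> E /set1P ->; apply: (OmR_sub_OmS hc tc sylS nA sylQ sylR sQR).
have hA : chain (cA c) by apply: subchain hc (cA_sub c) _; exists a0.
have [a ac] := chain_top hA.
have sat := a_sub_t ac tc.
have sSa : S \subset 'C_G(a).
  by apply: subset_trans (pHall_sub sylS) _; apply: setIS; apply: centS.
have [S2 sylS2 sSS2] := Sylow_superset sSa (pHall_pgroup sylS).
have Aa := a_Ap hc ac.
exists ((cA c :|: [set Om S2]) :|: [set Om S]); split; last first.
  by exists t, S; split=> //; left; exists a, S2.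
apply: (pre_add_chain _ (OmS_Ap At sylS)).
  apply: (pre_add (pre_sub (chain_pre hc) (cA_sub c)) (OmS_Ap Aa sylS2)).
  by move=> E Ec; apply: subset_trans (proj2 ac E Ec) (t_sub_OmS Aa sylS2).
move=> E /setUP[/(subsetP (cA_sub c)) Ec|/set1P ->].
  exact: (top_sub_OmS hc tc sylS Ec).
exact: (OmS2_sub hc tc ac sylS sylS2 sSS2).
Qed.


Lemma NJ M g : g \in G -> (G :&: 'N(M :^ g)) = (G :&: 'N(M)) :^ g.
Proof. by move=> Gg; rewrite conjIg normJ conjGid. Qed.

Lemma spec3J c d g : g \in G -> spec3 c d -> spec3 (conj_chain c g) (conj_chain d g).
Proof.
move=> Gg [t [S [tc sylS b]]]; exists (t :^ g)%G, (S :^ g)%G; split.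
- exact: topcJ.
- exact: SylJ.
case: b => [[a [S2 [ac sylS2 sSS2 ->]]]|[e0 [Q [R [sylQ sylR sQR ->]]]]].
  left; exists (a :^ g)%G, (S2 :^ g)%G; split.
  - by rewrite -cA_J //; apply: topcJ.
  - exact: SylJ.
  - by rewrite conjSg.
  by rewrite !conj_chainU !conj_chain_set1 !OmGJ cA_J.
right; split; first by rewrite -cA_J // e0 /conj_chain imset0.
exists (Q :^ g)%G, (R :^ g)%G; split.
- by rewrite OmGJ /= NJ // pHallJ2.
- by rewrite pHallJ.
- by rewrite conjSg.
by rewrite !conj_chainU !conj_chain_set1 !OmGJ.
Qed.

Lemma spec3_inv c d : chain c -> spec3 c d -> exists t, exists S,
  [/\ topc t c, p.-Sylow('C_G(t)) S, cA c :|: [set Om S] \subset d &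
   exists R, [/\ p.-Sylow(G) R, Om R \subset Om S & Om R \in d]].
Proof.
move=> hc [t [S [tc sylS b]]]; exists t, S; split=> //.
  case: b => [[a [S2 [_ _ _ ->]]]|[e0 [Q [R [_ _ _ ->]]]]].
    by rewrite -setUA; apply: setUS; apply: subsetUr.
  by rewrite e0 set0U subsetUr.
case: b => [[a [S2 [ac sylS2 sSS2 ->]]]|[e0 [Q [R [sylQ sylR sQR ->]]]]].
  exists S2; split.
  - have /ApP[saG abA _] := a_Ap hc ac.
    by rewrite -(typeA_Syl sylP saG abA sylS2) (a_tA ac).
  - exact: (OmS2_sub hc tc ac sylS sylS2 sSS2).
  by rewrite !inE eqxx orbT.
exists R; split=> //.
- exact: (OmR_sub_OmS hc tc sylS (noA_top tc e0) sylQ sylR sQR).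
by rewrite !inE eqxx.
Qed.

Lemma rank_nA t S : t \in Ap G p -> ~~ tA t -> p.-Sylow('C_G(t)) S -> 'r_p(Om S) = r.+1.
Proof. by move=> At nA sylS; rewrite (rankOmS At sylS) (negbTE nA). Qed.

Lemma spec3_mono c c' d d' : chain c -> chain c' -> c \subset c' ->
  spec3 c d -> spec3 c' d' -> exists2 x, x \in G & conj_chain d x \subset d'.
Proof.
move=> hc hc' sc h3 h3'.
have [t' [S' [tc' sylS' sd' [R2 [sylR2 sR2 R2d']]]]] := spec3_inv hc' h3'.
case: h3 => t [S [tc sylS b]].
have stt' := tops_sub sc tc tc'.
have At := top_Ap hc tc; have At' := top_Ap hc' tc'.
have OmS'd' : Om S' \in d' by apply: (subsetP sd'); rewrite !inE eqxx orbT.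
case: b => [[a [S2 [ac sylS2 sSS2 ->]]]|[e0 [Q [R [sylQ sylR sQR ->]]]]]; last first.
  have nA := noA_top tc e0.
  have nA' : ~~ tA t' by apply: contra nA; apply: tA_down.
  have eA : tA t = tA t' by rewrite (negbTE nA) (negbTE nA').
  have [y Cy eO] := conj_Om_eq stt' At At' eA sylS sylS'.
  have /setIP[Gy cy] := Cy.
  have sOG : Om S' \subset G := Om_Syl_sub sylS' (CtG t').
  have sylRy : p.-Sylow(G) (R :^ y)%G by rewrite pHallJ.
  have s1 : Om (R :^ y)%G \subset Om S'.
    rewrite -eO OmJ conjSg.
    exact: (OmR_sub_OmS hc tc sylS nA sylQ sylR sQR).
  have [n Nn en] := CL pr_p sylP rk (subxx G) (fun R h => h) sOG
     (Om_abelem (pHall_pgroup sylS')) (rank_nA At' nA' sylS') sylRy sylR2 s1 sR2.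
  have /setIP[Gn nn] := Nn.
  exists (y * n); first by rewrite groupM.
  rewrite -conj_chainM !conj_chainU !conj_chain_set1 eO.
  have -> : ((Om R :^ y) :^ n)%G = Om R2 by apply: val_inj; rewrite /= -en OmJ.
  have -> : (Om S' :^ n)%G = Om S' by apply: val_inj; rewrite /= (normP nn).
  by apply/subsetP => E /setUP[] /set1P ->.
have aA := a_tA ac.
have Aa := a_Ap hc ac.
have ac'0 : a \in cA c' by apply: (subsetP (cA_S sc)); case: ac.
case: h3' => t1 [S1 [tc1 sylS1 b']].
have et := top_uniq tc1 tc'; subst t1.
case: b' => [[a' [S2' [ac' sylS2' sSS2' ed']]]|[e0 _]]; last first.
  by have := in_set0 a; rewrite -e0 ac'0.
have aa' := tops_sub (cA_S sc) ac ac'.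
have OmS1d' : Om S1 \in d' by rewrite ed' !inE eqxx orbT.
have Aa' := a_Ap hc' ac'.
have aA' := a_tA ac'.
have hfix : forall y, y \in 'C(a) -> conj_chain (cA c) y = cA c.
  by move=> y cy; apply: conj_fix_sub ac (subxx _) cy.
have sc2 : cA c :|: [set Om S2'] \subset d'.
  rewrite ed'; apply: subset_trans (subsetUl _ _); apply: setSU; exact: cA_S.
have /ApP[sa'G aba' _] := Aa'.
have /ApP[saG aba _] := Aa.
have eS21 : p.-Sylow(G) S2' by rewrite -(typeA_Syl sylP sa'G aba' sylS2').
have sat := a_sub_t ac tc.
case: (boolP (tA t)) => At_.
  have eOm : Om S2 = Om S.
    apply: val_inj; apply: (abelem_eq pr_p (OmS2_sub hc tc ac sylS sylS2 sSS2) (Om_abelem (pHall_pgroup sylS))).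
    by rewrite (rankOmS At sylS) (rankOmS Aa sylS2) At_ aA.
  have eA : tA a = tA a' by rewrite aA aA'.
  have [y Cy eO] := conj_Om_eq aa' Aa Aa' eA sylS2 sylS2'.
  have /setIP[Gy cy] := Cy.
  exists y => //; rewrite !conj_chainU !conj_chain_set1 (hfix y cy) -eOm eO.
  by rewrite -setUA setUid.
have nA' : ~~ tA t' by apply: contra At_; apply: tA_down.
have eA : tA t = tA t' by rewrite (negbTE At_) (negbTE nA').
have [y Cy eO] := conj_Om_eq stt' At At' eA sylS sylS1.
have eOs : Om S :^ y = Om S1 :> {set gT} by have := congr1 val eO.
have sCa : 'C_G(t) \subset 'C_G(a) by apply: setIS; apply: centS.
have Cya := subsetP sCa y Cy.
have /setIP[Gy cy] := Cya.
have sHG : 'C_G(a) \subset G := subsetIl _ _.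
have sylHG : forall R, p.-Sylow('C_G(a)) R -> p.-Sylow(G) R.
  by move=> R sylR; rewrite -(typeA_Syl sylP saG aba sylR) aA.
have sat' : a \subset Om S1.
  apply: subset_trans aa' (subset_trans (tops_sub (cA_sub c') ac' tc') _).
  exact: t_sub_OmS At' sylS1.
have abS' := Om_abelem (pHall_pgroup sylS1).
have sMH : Om S1 \subset 'C_G(a).
  rewrite subsetI (Om_Syl_sub sylS1 (CtG t')) /=.
  exact: subset_trans (abelem_abelian abS') (centS sat').
have sylR1 : p.-Sylow('C_G(a)) (S2 :^ y)%G by rewrite pHallJ.
have sS2'C : S2' \subset 'C_G(a).
  apply: subset_trans (pHall_sub sylS2') _; apply: setIS; apply: centS aa'.
have sylR2a : p.-Sylow('C_G(a)) S2' := pHall_subl sS2'C sHG eS21.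
have s1 : Om (S2 :^ y)%G \subset Om S1.
  by rewrite OmJ -eOs conjSg; apply: (OmS2_sub hc tc ac sylS sylS2 sSS2).
have s2 : Om S2' \subset Om S1 := OmS2_sub hc' tc' ac' sylS1 sylS2' sSS2'.
have [n Nn en] := CL pr_p sylP rk sHG sylHG sMH abS' (rank_nA At' nA' sylS1) sylR1 sylR2a s1 s2.
have /setIP[Cna nn] := Nn.
have /setIP[Gn cn] := Cna.
exists (y * n); first by rewrite groupM.
rewrite -conj_chainM !conj_chainU !conj_chain_set1 (hfix y cy) (hfix n cn) eO.
have -> : ((Om S2 :^ y) :^ n)%G = Om S2' by apply: val_inj; rewrite /= -en OmJ.
have -> : (Om S1 :^ n)%G = Om S1 by apply: val_inj; rewrite /= (normP nn).
by apply/subsetP => E /setUP[/(subsetP sc2) //|/set1P ->].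
Qed.

Lemma spec23 c d2 d3 : chain c -> spec2 c d2 -> spec3 c d3 ->
  exists2 x, x \in G & conj_chain d2 x \subset d3.
Proof.
move=> hc [t1 [S1 [tc1 sylS1 ->]]] h3.
have [t [S [tc sylS sd [R [sylR _ _]]]]] := spec3_inv hc h3.
have et := top_uniq tc1 tc; subst t1.
case: ifP => At.
  exists 1; rewrite ?group1 // conj_chain1; apply: subset_trans sd.
  apply: subset_trans (subsetUl _ _).
  by apply/subsetP => E Ec; apply: all_A tc At Ec.
have [y Cy eS] := Sylow_trans sylS1 sylS.
have /setIP[Gy cy] := Cy.
exists y => //; rewrite conj_chainU conj_chain_set1 (conj_fix_sub tc (cA_sub c) cy).
have -> : (Om S1 :^ y)%G = Om S by apply: val_inj; rewrite /= -OmJ /Om /= -eS.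
exact: sd.
Qed.

Lemma const3 c d : chain c -> spec3 c d ->
  exists2 x, x \in G & conj_chain [set Om P] x \subset d.
Proof.
move=> hc h3; have [t [S [_ _ _ [R [sylR _ Rd]]]]] := spec3_inv hc h3.
have [x Gx eR] := Syl_Om sylP sylR.
exists x => //; rewrite conj_chain_set1 sub1set.
have -> : (Om P :^ x)%G = Om R by apply: val_inj; rewrite /= -eR.
exact: Rd.
Qed.

Lemma OmP_chain : chain [set Om P].
Proof.
apply: chain_intro; first by exists (Om P); rewrite inE.
  by move=> E /set1P ->; apply: SylG_Ap.
by move=> E F /set1P -> /set1P ->; rewrite subxx.
Qed.

End Specs.

Section Orbits.
Variables (gT : finGroupType) (G : {group gT}) (p : nat).
Local Notation chain := (is_Ap_chain G p).
Local Notation pt := (Ap_orbit_pt G p).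
Implicit Types (c d e : {set {group gT}}) (O Q : pt).

Lemma pt_rep O : exists2 c, chain c & val O = chain_orbit G c.
Proof. by case: O => /= O /imsetP[c]; rewrite inE => hc ->; exists c. Qed.

Lemma pt_conj O d g : d \in val O -> g \in G -> conj_chain d g \in val O.
Proof.
have [c hc ->] := pt_rep O => /imsetP[a Ga ->] Gg.
by rewrite conj_chainM; apply: orbit_conj; rewrite groupM.
Qed.

Lemma pt_chain O d : d \in val O -> chain d.
Proof.
have [c hc ->] := pt_rep O => /imsetP[a Ga ->].
exact: conj_chain_chain.
Qed.

Lemma pt_same O c c' : c \in val O -> c' \in val O -> exists2 g, g \in G & c' = conj_chain c g.
Proof. by have [c0 hc0 ->] := pt_rep O; apply: orbit_same. Qed.

Definition mkpt d (hd : chain d) : pt :=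
  exist _ (chain_orbit G d) (introT imsetP (ex_intro2 _ _ d (introT (@idP _) (etrans (in_set _ _) hd)) erefl)).

Lemma mkpt_mem d (hd : chain d) : d \in val (mkpt hd).
Proof. exact: orbit_mem. Qed.

Section Fmap.
Variable spec : {set {group gT}} -> {set {group gT}} -> Prop.
Hypothesis specJ : forall c d g, g \in G -> spec c d -> spec (conj_chain c g) (conj_chain d g).
Hypothesis spec_ex : forall c, chain c -> exists d, chain d /\ spec c d.

Lemma fmap_ex O : exists Q : pt, exists c, exists d, [/\ c \in val O, d \in val Q & spec c d].
Proof.
have [c hc eO] := pt_rep O; have [d [hd sd]] := spec_ex hc.
exists (mkpt hd), c, d; split=> //; last exact: mkpt_mem.
by rewrite eO; apply: orbit_mem.
Qed.

Definition fmap O : pt := proj1_sig (Stdlib.Logic.ClassicalEpsilon.constructive_indefinite_description _ (fmap_ex O)).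

Lemma fmap_spec O : exists c, exists d, [/\ c \in val O, d \in val (fmap O) & spec c d].
Proof. exact: (proj2_sig (Stdlib.Logic.ClassicalEpsilon.constructive_indefinite_description _ (fmap_ex O))). Qed.

Lemma spec_any O c : c \in val O -> exists d, d \in val (fmap O) /\ spec c d.
Proof.
move=> cO; have [c0 [d0 [c0O d0f s0]]] := fmap_spec O.
have [g Gg ->] := pt_same c0O cO.
by exists (conj_chain d0 g); split; [apply: pt_conj|apply: specJ].
Qed.

Hypothesis spec_mono : forall c c' d d', chain c -> chain c' -> c \subset c' ->
  spec c d -> spec c' d' -> exists2 x, x \in G & conj_chain d x \subset d'.

Lemma fmap_mono O O' : Ap_orbit_le O O' -> Ap_orbit_le (fmap O) (fmap O').
Proof.
case/exists_inP => c cO /exists_inP[c' c'O scc'].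
have [d [df sd]] := spec_any cO; have [d' [d'f sd']] := spec_any c'O.
have [x Gx sx] := spec_mono (pt_chain cO) (pt_chain c'O) scc' sd sd'.
apply/exists_inP; exists (conj_chain d x); first exact: pt_conj.
by apply/exists_inP; exists d'.
Qed.

Hypothesis spec_up : forall c d, spec c d -> c \subset d.

Lemma fmap_up O : Ap_orbit_le O (fmap O).
Proof.
have [c [d [cO df sd]]] := fmap_spec O.
by apply/exists_inP; exists c => //; apply/exists_inP; exists d => //; apply: spec_up.
Qed.
End Fmap.

Lemma fmap_cmp (sA sB : {set {group gT}} -> {set {group gT}} -> Prop)
  (AJ : forall c d g, g \in G -> sA c d -> sA (conj_chain c g) (conj_chain d g))
  (Aex : forall c, chain c -> exists d, chain d /\ sA c d)
  (BJ : forall c d g, g \in G -> sB c d -> sB (conj_chain c g) (conj_chain d g))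
  (Bex : forall c, chain c -> exists d, chain d /\ sB c d) :
  (forall c d e, chain c -> sA c d -> sB c e -> exists2 x, x \in G & conj_chain d x \subset e) ->
  forall O, Ap_orbit_le (fmap Aex O) (fmap Bex O).
Proof.
move=> cmp O; have [c hc eO] := pt_rep O.
have cO : c \in val O by rewrite eO orbit_mem.
have [d [df sd]] := spec_any AJ Aex cO; have [e [ef se]] := spec_any BJ Bex cO.
have [x Gx sx] := cmp _ _ _ hc sd se.
apply/exists_inP; exists (conj_chain d x); first exact: pt_conj.
by apply/exists_inP; exists e.
Qed.

Lemma fmap_const (sA : {set {group gT}} -> {set {group gT}} -> Prop)
  (AJ : forall c d g, g \in G -> sA c d -> sA (conj_chain c g) (conj_chain d g))
  (Aex : forall c, chain c -> exists d, chain d /\ sA c d) c0 (h0 : chain c0) :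
  (forall c d, chain c -> sA c d -> exists2 x, x \in G & conj_chain c0 x \subset d) ->
  forall O, Ap_orbit_le (mkpt h0) (fmap Aex O).
Proof.
move=> cmp O; have [c hc eO] := pt_rep O.
have cO : c \in val O by rewrite eO orbit_mem.
have [d [df sd]] := spec_any AJ Aex cO.
have [x Gx sx] := cmp _ _ hc sd.
apply/exists_inP; exists (conj_chain c0 x); first exact: pt_conj (mkpt_mem h0) Gx.
by apply/exists_inP; exists d.
Qed.

End Orbits.

Lemma ntOm_of (gT : finGroupType) (G P : {group gT}) p : prime p -> (p %| #|G|)%N ->
  p.-Sylow(G) P -> Om P :!=: 1%G.
Proof.
move=> pr dv sylP; rewrite /= Ohm1_eq1; apply/eqP => Z1.
have P1 := trivg_center_pgroup (pHall_pgroup sylP) Z1.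
have : (1 < #|P|)%N by rewrite (card_Hall sylP) p_part_gt1 mem_primes pr cardG_gt0 dv.
by rewrite P1 cards1.
Qed.
End Dev.

Module DevTopo.
Import Order.TTheory GRing.Theory Num.Theory.
Local Open Scope classical_set_scope.
Local Open Scope ring_scope.
Section Topo.
Variables (T : choiceType) (le : rel T).
Local Notation X := (alexandrov le).

Lemma openX (A : set X) : open A = downset_open le A.
Proof. by []. Qed.

Lemma nbhs_prodX (x : X) (t : Rdefinitions.R) (A : set X) (B : set Rdefinitions.R) (Pz : set (X * Rdefinitions.R)) :
  open A -> A x -> open B -> B t -> A `*` B `<=` Pz -> nbhs (x, t) Pz.
Proof.
move=> oA Ax oB Bt sP.
exists (A, B) => //=; split.
  by apply: open_nbhs_nbhs; split.
by apply: open_nbhs_nbhs; split.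
Qed.

Variables (f1 f2 f3 : T -> T) (x0 : T).
Hypotheses (m1 : forall x y, le x y -> le (f1 x) (f1 y))
  (m2 : forall x y, le x y -> le (f2 x) (f2 y))
  (m3 : forall x y, le x y -> le (f3 x) (f3 y))
  (c1 : forall x, le x (f1 x)) (c2 : forall x, le (f2 x) (f1 x))
  (c3 : forall x, le (f2 x) (f3 x)) (c4 : forall x, le x0 (f3 x)).

Local Notation RR := Rdefinitions.R.

Definition Hzz (z : X * RR) : X :=
  let: (x, t) := z in
  if t < 4^-1 then x else if t == 4^-1 then f1 x else
  if t < 3 / 4 then f2 x else if t == 3 / 4 then f3 x else x0.

Lemma pre_open (f : T -> T) (A : set X) : (forall x y, le x y -> le (f x) (f y)) ->
  open A -> open (f @^-1` A : set X).
Proof. by move=> mf; rewrite !openX => oA x y yx /= Afx; apply: oA (mf _ _ yx) Afx. Qed.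

Lemma open_int (a b : RR) : open [set s : RR | a < s < b].
Proof.
have -> : [set s : RR | a < s < b] = [set s | a < s] `&` [set s | s < b].
  by apply/seteqP; split=> s /=; [move/andP|move=> [-> ->]].
by apply: openI; [apply: open_gt|apply: open_lt].
Qed.

Lemma Hzz_cont : continuous Hzz.
Proof.
apply/continuousP => A oA; rewrite openE => -[x t] /= HA.
have oA' : downset_open le A := oA.
have o1 := pre_open m1 oA; have o2 := pre_open m2 oA; have o3 := pre_open m3 oA.
have q1 : (4^-1 : RR) < 2^-1 by lra.
have q2 : (2^-1 : RR) < 3 / 4 by lra.
have q3 : (3 / 4 : RR) < 1 by lra.
have q0 : (0 : RR) < 4^-1 by lra.
rewrite /interior.
case: (ltgtP t (4^-1)) HA => [lt1|gt1|->] HA.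
- apply: (@nbhs_prodX x t A [set s | s < 4^-1]).
  + exact: oA.
  + exact: HA.
  + exact: open_lt.
  + exact: lt1.
  by move=> [y s] /= [Ay ls]; rewrite ls.
- case: (ltgtP t (3/4)) HA => [lt3|gt3|->] HA.
  + have ne1 : (t == 4^-1) = false by apply/negbTE; rewrite gt_eqF.
    have nl1 : (t < 4^-1) = false by apply/negbTE; rewrite -leNgt ltW.
    rewrite ?nl1 ?ne1 ?lt3 /= in HA.
    apply: (@nbhs_prodX x t (f2 @^-1` A) [set s | 4^-1 < s < 3/4]).
    * exact: o2.
    * exact: HA.
    * exact: open_int.
    * by rewrite /= gt1 lt3.
    move=> [y s] /= [Ay /andP[l1 l2]].
    by rewrite ltNge (ltW l1) /= gt_eqF // l2.
  + have ne1 : (t == 4^-1) = false by apply/negbTE; rewrite gt_eqF.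
    have ne3 : (t == 3/4) = false by apply/negbTE; rewrite gt_eqF.
    have nl1 : (t < 4^-1) = false by apply/negbTE; rewrite -leNgt ltW.
    have nl3 : (t < 3/4) = false by apply/negbTE; rewrite -leNgt ltW.
    rewrite ?nl1 ?ne1 ?nl3 ?ne3 /= in HA.
    apply: (@nbhs_prodX x t setT [set s | 3/4 < s]).
    * exact: openT.
    * by [].
    * exact: open_gt.
    * exact: gt3.
    move=> [y s] /= [_ l1].
    have l0 : 4^-1 < s by lra.
    by rewrite ltNge (ltW l0) /= gt_eqF // ltNge (ltW l1) /= gt_eqF.
  + have gt : (4^-1 : RR) < 3/4 by lra.
    have nl1 : ((3/4 : RR) < 4^-1) = false by apply/negbTE; rewrite -leNgt ltW.
    have ne1 : ((3/4 : RR) == 4^-1) = false by apply/negbTE; rewrite gt_eqF.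
    rewrite ?nl1 ?ne1 ?ltxx ?eqxx /= in HA.
    have A0 : A x0 by apply: oA' (c4 x) HA.
    apply: (@nbhs_prodX x (3/4) (f2 @^-1` A `&` f3 @^-1` A) [set s | 2^-1 < s < 1]).
    * exact: openI.
    * by split=> //; apply: oA' (c3 x) HA.
    * exact: open_int.
    * by rewrite /= q2 q3.
    move=> [y s] /= [[A2 A3] /andP[l1 l2]].
    have l0 : 4^-1 < s by lra.
    rewrite ltNge (ltW l0) /= gt_eqF //.
    by case: (ltgtP s (3/4)).
- rewrite ?ltxx ?eqxx /= in HA.
  apply: (@nbhs_prodX x (4^-1) (A `&` f1 @^-1` A `&` f2 @^-1` A) [set s | 0 < s < 2^-1]).
  + by apply: openI => //; apply: openI.
  + by split; [split=> //; apply: oA' (c1 x) HA|apply: oA' (c2 x) HA].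
  + exact: open_int.
  + by rewrite /= q0 q1.
  move=> [y s] /= [[[Ay A1] A2] /andP[l1 l2]].
  have l3 : s < 3/4 by lra.
  by case: (ltgtP s (4^-1)); rewrite ?l3.
Qed.

Lemma zigzag : contractible X.
Proof.
exists x0, Hzz; split; first exact: continuous_subspaceT Hzz_cont.
split=> x /=.
  by have -> : (0 : RR) < 4^-1 by lra.
have h1 : ((1 : RR) < 4^-1) = false by apply/negbTE; rewrite -leNgt; lra.
have h2 : ((1 : RR) == 4^-1) = false by apply/negbTE; apply/eqP; lra.
have h3 : ((1 : RR) < 3/4) = false by apply/negbTE; rewrite -leNgt; lra.
have h4 : ((1 : RR) == 3/4) = false by apply/negbTE; apply/eqP; lra.
by rewrite h1 h2 h3 h4.
Qed.
End Topo.

End DevTopo.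

Theorem theorem5p9 (gT : finGroupType) (G P : {group gT}) (p : nat) :
  prime p -> (p %| #|G|)%N -> P \in ('Syl_p(G))%g ->
  (p_rank p G - p_rank p ('Ohm_1('Z(P)))%g <= 1)%N ->
  contractible (Ap_orbit_space G p).
Proof.
move=> pr dv sylPin rkle.
have sylP : (p.-Sylow(G) P)%g by move: sylPin; rewrite inE.
have rk : ('r_p(G) <= ('r_p(Dev.Om P)).+1)%N%g by rewrite -addn1 -leq_subLR.
have nt := Dev.ntOm_of pr dv sylP.
pose A1 := @Dev.spec1_ex gT G P p.
pose A2 := @Dev.spec2_ex gT G P p.
pose A3 := @Dev.spec3_ex gT G P p pr sylP rk nt.
pose J1 := @Dev.spec1J gT G P p.
pose J2 := @Dev.spec2J gT G P p.
pose J3 := @Dev.spec3J gT G P p.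
apply: (@DevTopo.zigzag _ _ (Dev.fmap A1) (Dev.fmap A2) (Dev.fmap A3) (Dev.mkpt (Dev.OmP_chain sylP nt))).
- by move=> x y; apply: (Dev.fmap_mono J1 A1 (@Dev.spec1_mono _ G P p pr sylP rk)).
- by move=> x y; apply: (Dev.fmap_mono J2 A2 (@Dev.spec2_mono _ G P p pr sylP rk)).
- by move=> x y; apply: (Dev.fmap_mono J3 A3 (@Dev.spec3_mono _ G P p pr sylP rk)).
- by move=> x; apply: (Dev.fmap_up A1 (@Dev.spec1_ge _ G P p)).
- move=> x; apply: (Dev.fmap_cmp J2 A2 J1 A1) => c d e hc h2 h1.
  exact: (@Dev.spec21 _ G P p c e d hc h1 h2).
- move=> x; apply: (Dev.fmap_cmp J2 A2 J3 A3) => c d e hc h2 h3.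
  exact: (Dev.spec23 pr sylP rk hc h2 h3).
- move=> x; apply: (Dev.fmap_const J3 A3) => c d hc h3.
  exact: (Dev.const3 pr sylP rk hc h3).
Qed.
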